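(* Let $\mathcal{K}$ be a finite simplicial complex with a fixed total order on its vertex set, let $\Lambda_S$ be its stories algebra and $\mathcal{I}\subseteq\Lambda_S$ the simplicial ideal described below. Then the quotient algebra $\Lambda_S/\mathcal{I}$ is isomorphic (as an algebra) to the incidence algebra $\mathcal{I}(\mathcal{K})$ of $\mathcal{K}$ (ordered by inclusion).
   Context: A simplicial complex $\mathcal{K}$ on a finite non-empty vertex set $V$ is a collection of non-empty subsets of $V$ containing all singletons and closed under non-empty subsets; it is a poset under inclusion; $\dim P=|P|-1$. For $P=\{v_0,\ldots,v_n\}$ in increasing vertex order, $\epsilon_{v_iP}=(-1)^i$. Incidence algebra: $\mathcal{I}(\mathcal{K})$ is the complex vector space with basis $\{|P\rangle\langle Q|:P,Q\in\mathcal{K},\ P\subseteq Q\}$ and product $|P\rangle\langle Q|\cdot|R\rangle\langle S|=\delta_{QR}|P\rangle\langle S|$. Stories algebra: $\Lambda_S=\bigoplus_{n\ge0}\Lambda_S^n$, where $\Lambda_S^n$ has basis the sequences $\langle P_0,\ldots,P_n\rangle$ of simplices with $P_{i-1}\neq P_i$ for all $i$, and product $\langle P_0,\ldots,P_n\rangle\cdot\langle Q_0,\ldots,Q_m\rangle=\langle P_0,\ldots,P_n,Q_1,\ldots,Q_m\rangle$ if $P_n=Q_0$, and $0$ otherwise. A story is fair if for each $i\ge1$ there is $v_i\in P_i$ with $P_{i-1}=P_i\setminus\{v_i\}$, otherwise unfair; for a fair story $w$, $\epsilon_w=\prod_{i=1}^n\epsilon_{v_iP_i}$. $\mathcal{I}_N^n$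 is the span of unfair $n$-stories, $\mathcal{I}_S^n$ is the span of all $\epsilon_ww-\epsilon_{w'}w'$ with $w,w'$ fair $n$-stories having the same first simplex and the same last simplex, and $\mathcal{I}=\bigoplus_{n\ge1}(\mathcal{I}_N^n\oplus\mathcal{I}_S^n)$ (a two-sided ideal of $\Lambda_S$). *)

(* Defs.v *)
From Stdlib Require Import Reals.
From mathcomp Require Import all_boot all_algebra.
From mathcomp Require Import freeg.
From mathcomp Require Import complex.
From mathcomp Require Import Rstruct.

Set Implicit Arguments.
Unset Strict Implicit.
Unset Printing Implicit Defensive.

Import GRing.Theory.
Local Open Scope ring_scope.

Definition C : fieldType := R[i].

Section SimplicialComplex.
(* Vertex set V = 'I_n = {0 < 1 < ... < n-1}, with its natural total order. *)
Variable n : nat.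

Definition simplex := {set 'I_n}.

Definition is_simplicial_complex (K : {set simplex}) : Prop :=
  [/\ set0 \notin K,
      (forall v : 'I_n, [set v] \in K) &
      (forall P Q : simplex, P \in K -> Q \subset P -> Q != set0 -> Q \in K)].

(* A story <P_0,...,P_m> is represented by the sequence [:: P_0; ...; P_m];
   it is an m-story when its size is m+1. *)
Definition story := seq simplex.

Definition is_story (K : {set simplex}) (s : story) : bool :=
  [&& (0 < size s)%N, all (fun P => P \in K) s &
      path (fun P Q => P != Q) (head set0 s) (behead s)].

Definition first (s : story) : simplex := head set0 s.
Definition final (s : story) : simplex := last set0 s.

Definition fair_step (P Q : simplex) : bool :=
  [exists v : 'I_n, (v \in Q) && (P == Q :\ v)].

Definition fair (s : story) : bool := path fair_step (head set0 s) (behead s).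

(* epsilon_{vP} = (-1)^i where v is the i-th element (from 0) of P *)
Definition eps_vP (v : 'I_n) (P : simplex) : C :=
  (-1) ^+ #|[set u in P | (u < v)%N]|.

(* For a fair step P_{i-1} = P_i \ {v_i}, this is epsilon_{v_i P_i}
   (the product ranges over the singleton P_i :\: P_{i-1} = {v_i}). *)
Definition eps_step (P Q : simplex) : C := \prod_(v in Q :\: P) eps_vP v Q.

Fixpoint eps_path (P : simplex) (p : story) : C :=
  if p is Q :: p' then eps_step P Q * eps_path Q p' else 1.

Definition eps_story (s : story) : C := eps_path (head set0 s) (behead s).

(* Ambient free C-vector space on all sequences of simplices; Lambda_S is the
   subspace spanned by the stories of K. *)
Definition FS := {freeg story / C}.

Definition in_stories_alg (K : {set simplex}) (x : FS) : Prop :=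
  forall s, s \in dom x -> is_story K s.

Definition story_mul (s t : story) : FS :=
  if final s == first t then << s ++ behead t >> else 0.

Definition stories_mul (x y : FS) : FS :=
  fglift (fun s => fglift (fun t => story_mul s t) y) x.

Definition stories_one (K : {set simplex}) : FS :=
  \sum_(P in K) << [:: P] >>.

Definition unfair_gen (K : {set simplex}) (g : FS) : Prop :=
  exists s, [/\ is_story K s, (1 < size s)%N, ~~ fair s & g = << s >>].

Definition fair_gen (K : {set simplex}) (g : FS) : Prop :=
  exists s t, [/\ [&& is_story K s, is_story K t, fair s & fair t],
    (1 < size s)%N /\ size s = size t,
    first s = first t, final s = final t &
    g = eps_story s *: << s >> - eps_story t *: << t >>].

Definition in_simplicial_ideal (K : {set simplex}) (x : FS) : Prop :=
  exists gs : seq (C * FS),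
    (forall cg, cg \in gs -> unfair_gen K cg.2 \/ fair_gen K cg.2) /\
    x = \sum_(cg <- gs) cg.1 *: cg.2.

(* Ambient free vector space on pairs (P,Q); the basis element |P><Q| is the
   pair (P,Q); I(K) is spanned by the |P><Q| with P, Q in K, P subset Q. *)
Definition FI := {freeg (simplex * simplex) / C}.

Definition in_incidence_alg (K : {set simplex}) (f : FI) : Prop :=
  forall PQ, PQ \in dom f -> [&& PQ.1 \in K, PQ.2 \in K & PQ.1 \subset PQ.2].

Definition ket_mul (a b : simplex * simplex) : FI :=
  if a.2 == b.1 then << (a.1, b.2) >> else 0.

Definition incidence_mul (f g : FI) : FI :=
  fglift (fun a => fglift (fun b => ket_mul a b) g) f.

Definition incidence_one (K : {set simplex}) : FI :=
  \sum_(P in K) << (P, P) >>.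

End SimplicialComplex.

(* Main.v *)
From HB Require Import structures.
Require Import Defs.
From mathcomp Require Import zify.
From Stdlib Require Import Reals.
From mathcomp Require Import all_boot all_algebra freeg complex Rstruct.
Import GRing.Theory.
Local Notation CC := Defs.C.
Set Implicit Arguments.
Unset Strict Implicit.
Unset Printing Implicit Defensive.
Local Open Scope ring_scope.

Section FG.
Context (K : choiceType) (M : lmodType CC) (F : K -> M).

Lemma fglift_add : zmod_morphism (fglift F).
Proof. exact: lift_is_additive. Qed.

HB.instance Definition _ := GRing.isZmodMorphism.Build {freeg K / CC} M (fglift F) fglift_add.

Lemma freegUZ (k : CC) (x : K) : << k *g x >> = k *: << x >> :> {freeg K / CC}.
Proof. by apply/eqP/freeg_eqP=> y; rewrite coeffZ !coeffU mul1r. Qed.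

Lemma fgliftE (D : {freeg K / CC}) :
  fglift F D = \sum_(z <- dom D) coeff z D *: F z.
Proof.
rewrite -{1}[D]freeg_sumE raddf_sum; apply: eq_bigr => z _; exact: liftU.
Qed.

Lemma fglift_scale : scalable (fglift F).
Proof.
move=> c D; rewrite -{1}[D]freeg_sumE scaler_sumr raddf_sum fgliftE scaler_sumr.
apply: eq_bigr => z _; rewrite freegUZ scalerA -freegUZ.
exact: (etrans (liftU F _ _) (esym (scalerA _ _ _))).
Qed.

HB.instance Definition _ := GRing.isScalable.Build CC {freeg K / CC} M *:%R (fglift F) fglift_scale.

Lemma fgliftZ c D : fglift F (c *: D) = c *: fglift F D.
Proof. exact: fglift_scale. Qed.

Lemma fglift0 : fglift F 0 = 0.
Proof. exact: raddf0. Qed.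

Lemma fglift_sum (I : Type) (r : seq I) (G : I -> {freeg K / CC}) :
  fglift F (\sum_(i <- r) G i) = \sum_(i <- r) fglift F (G i).
Proof. exact: raddf_sum. Qed.

Lemma fgliftB D1 D2 : fglift F (D1 - D2) = fglift F D1 - fglift F D2.
Proof. exact: raddfB. Qed.

Lemma fglift1 (x : K) : fglift F << x >> = F x.
Proof. by rewrite liftU scale1r. Qed.

End FG.

Lemma fglift_linF (K : choiceType) (M : lmodType CC) (I : Type) (r : seq I)
  (c : I -> CC) (H : K -> I -> M) (D : {freeg K / CC}) :
  fglift (fun a => \sum_(t <- r) c t *: H a t) D =
  \sum_(t <- r) c t *: fglift (fun a => H a t) D.
Proof.
rewrite fgliftE.
under [RHS]eq_bigr do rewrite fgliftE scaler_sumr.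
rewrite exchange_big /=; apply: eq_bigr => z _.
rewrite scaler_sumr; apply: eq_bigr => t _; rewrite !scalerA mulrC //.
Qed.


Section Comb.
Variable n : nat.
Implicit Types (P Q : simplex n) (s t : story n).

Lemma fair_step_sub P Q : fair_step P Q -> P \subset Q.
Proof. by case/existsP=> v /andP[_ /eqP->]; rewrite subD1set. Qed.

Lemma fair_step_card P Q : fair_step P Q -> #|Q| = (#|P| + 1)%N.
Proof.
case/existsP=> v /andP[vQ /eqP->]; rewrite (cardsD1 v Q) vQ addnC //.
Qed.

Lemma path_fair_sub x l : path (@fair_step n) x l -> x \subset last x l.
Proof.
elim: l x => [|y l IH] x /=; first by [].
case/andP=> h1 h2; have H := IH _ h2.
by apply/subsetP=> z /(subsetP (fair_step_sub h1)) /(subsetP H).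
Qed.

Lemma path_fair_card x l : path (@fair_step n) x l -> #|last x l| = (#|x| + size l)%N.
Proof.
elim: l x => [|y l IH] x /=; first by rewrite addn0.
case/andP=> h1 h2; by rewrite (IH _ h2) (fair_step_card h1) addn1 addSnnS.
Qed.

Lemma eps_vP_sq (v : 'I_n) P : eps_vP v P * eps_vP v P = 1.
Proof. by rewrite /eps_vP -exprD -signr_odd oddD addbb. Qed.

Lemma eps_step_sq P Q : eps_step P Q * eps_step P Q = 1.
Proof.
rewrite /eps_step -big_split /=; apply: big1 => v _; exact: eps_vP_sq.
Qed.

Lemma eps_path_sq P p : eps_path P p * eps_path P p = 1.
Proof.
elim: p P => [|Q p IH] P /=; first by rewrite mulr1.
by rewrite mulrACA eps_step_sq IH mulr1.
Qed.

Lemma eps_story_sq s : eps_story s * eps_story s = 1.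
Proof. exact: eps_path_sq. Qed.

Lemma eps_path_cat P p q :
  eps_path P (p ++ q) = eps_path P p * eps_path (last P p) q.
Proof.
elim: p P => [|Q p IH] P /=; first by rewrite mul1r.
by rewrite IH mulrA.
Qed.

Fixpoint build P (vs : seq 'I_n) : story n :=
  if vs is v :: vs' then P :: build (v |: P) vs' else [:: P].

Definition canon P Q := build P (enum (Q :\: P)).

Lemma build_cons P vs : build P vs = P :: behead (build P vs).
Proof. by case: vs. Qed.

Lemma build_lastx x P vs : last x (build P vs) = last set0 (build P vs).
Proof. by rewrite build_cons. Qed.

Lemma build_last P vs : last set0 (build P vs) = P :|: [set v in vs].
Proof.
elim: vs P => [|v vs IH] P /=.
  by apply/setP=> x; rewrite !inE orbF.
rewrite build_lastx IH.
by apply/setP=> x; rewrite !inE orbA (orbC (x == v)).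
Qed.

Lemma build_size P vs : size (build P vs) = (size vs).+1.
Proof. by elim: vs P => [|v vs IH] P //=; rewrite IH. Qed.

Lemma build_fair P vs : (forall v, v \in vs -> v \notin P) -> uniq vs ->
  fair (build P vs).
Proof.
elim: vs P => [|v vs IH] P //= Hv /andP[vvs uvs].
rewrite /fair /= build_cons /=; apply/andP; split.
  apply/existsP; exists v; rewrite setU11 /=.
  apply/eqP; rewrite setU1K //; apply: Hv; exact: mem_head.
have H : fair (build (v |: P) vs).
  apply: IH uvs => w wvs.
  rewrite !inE negb_or Hv ?(in_cons, wvs, orbT) // andbT.
  by apply/eqP=> ew; rewrite -ew wvs in vvs.
by move: H; rewrite /fair [build _ vs]build_cons.
Qed.

Lemma build_neq P vs : (forall v, v \in vs -> v \notin P) -> uniq vs ->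
  path (fun P Q => P != Q) (head set0 (build P vs)) (behead (build P vs)).
Proof.
elim: vs P => [|v vs IH] P //= Hv /andP[vvs uvs].
have H : path (fun P Q => P != Q) (head set0 (build (v |: P) vs))
    (behead (build (v |: P) vs)).
  apply: IH uvs => w wvs.
  rewrite !inE negb_or Hv ?(in_cons, wvs, orbT) // andbT.
  by apply/eqP=> ew; rewrite -ew wvs in vvs.
move: H; rewrite [build _ vs]build_cons /= => ->; rewrite andbT.
apply/eqP=> e; have := Hv v (mem_head _ _); rewrite e setU11 //.
Qed.

Lemma build_mem P vs X : X \in build P vs ->
  P \subset X /\ X \subset P :|: [set v in vs].
Proof.
elim: vs P => [|v vs IH] P /=.
  by rewrite inE => /eqP->; rewrite subxx; split=> //; apply/subsetP=> x; rewrite !inE => ->.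
rewrite inE => /orP[/eqP->|/IH[h1 h2]].
  by rewrite subxx; split=> //; apply/subsetP=> x; rewrite !inE => ->.
split.
  by apply/subsetP=> x xP; apply: (subsetP h1); rewrite !inE xP orbT.
apply/subsetP=> x /(subsetP h2); rewrite !inE.
by case: (x == v); rewrite ?orbT //= => /orP[->|->]; rewrite ?orbT.
Qed.

Lemma canon_head P Q : head set0 (canon P Q) = P.
Proof. by rewrite /canon build_cons. Qed.

Lemma canon_last P Q : P \subset Q -> last set0 (canon P Q) = Q.
Proof.
move=> PQ; rewrite /canon build_last.
have -> : [set v in enum (Q :\: P)] = Q :\: P by apply/setP=> x; rewrite !inE mem_enum !inE.
apply/setP=> x; rewrite !inE; case xP: (x \in P); rewrite ?andbT //=.
by rewrite (subsetP PQ).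
Qed.

Lemma canon_fair P Q : fair (canon P Q).
Proof.
apply: build_fair; last exact: enum_uniq.
by move=> v; rewrite mem_enum !inE => /andP[].
Qed.

Lemma canon_story (K : {set simplex n}) P Q : is_simplicial_complex K ->
  P \in K -> Q \in K -> P \subset Q -> is_story K (canon P Q).
Proof.
case=> K0 _ Kc PK QK PQ; apply/and3P; split.
- by rewrite /canon build_size.
- apply/allP=> X /build_mem[h1 h2]; apply: (Kc Q) QK _ _.
    apply/subsetP=> x /(subsetP h2); rewrite !inE mem_enum !inE.
    by case/orP=> [/(subsetP PQ)|/andP[]].
  apply/eqP=> X0; move: h1; rewrite X0 subset0 => /eqP P0.
  by rewrite -P0 PK in K0.
- apply: build_neq; last exact: enum_uniq.
  by move=> v; rewrite mem_enum !inE => /andP[].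
Qed.

Lemma canon_refl P : canon P P = [:: P].
Proof. by rewrite /canon setDv enum_set0. Qed.

End Comb.

Section Main.
Variable n : nat.
Implicit Types (P Q : simplex n) (s t : story n).

Definition phiB s : FI n :=
  if fair s then eps_story s *: << (first s, final s) >> else 0.

Definition psiB (pq : simplex n * simplex n) : FS n :=
  eps_story (canon pq.1 pq.2) *: << canon pq.1 pq.2 >>.

Definition phi : {linear FS n -> FI n} := fglift phiB.
Definition psi : {linear FI n -> FS n} := fglift psiB.

Lemma phiU s : phi << s >> = phiB s.
Proof. exact: fglift1. Qed.

Lemma psiU pq : psi << pq >> = psiB pq.
Proof. exact: fglift1. Qed.

Lemma fair_cat s t : (0 < size s)%N -> (0 < size t)%N -> final s = first t ->
  [/\ fair (s ++ behead t) = fair s && fair t,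
      eps_story (s ++ behead t) = eps_story s * eps_story t,
      first (s ++ behead t) = first s &
      final (s ++ behead t) = final t].
Proof.
case: s => [|a s'] //; case: t => [|b t'] // _ _.
rewrite /final /first /= => e.
split.
- by rewrite /fair /= cat_path e.
- by rewrite /eps_story /= eps_path_cat e.
- by [].
- by rewrite last_cat e.
Qed.

Lemma fair_size1 s : (0 < size s)%N -> ~~ fair s -> (1 < size s)%N.
Proof. by case: s => [|a [|b s']]. Qed.

Lemma fair_sub_card s : (0 < size s)%N -> fair s ->
  first s \subset final s /\ #|final s| = (#|first s| + (size s).-1)%N.
Proof.
case: s => [|a s'] // _ h; rewrite /first /final /=.
by split; [exact: path_fair_sub | exact: path_fair_card].
Qed.

Lemma story_ends (K : {set simplex n}) s : is_story K s ->
  [/\ (0 < size s)%N, first s \in K & final s \in K].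
Proof.
case/and3P=> h1 /allP h2 _; split=> //.
  by apply: h2; case: s h1 => // a s' _; exact: mem_head.
by apply: h2; case: s h1 => // a s' _; rewrite /final /=; exact: mem_last.
Qed.

Lemma phi_mul_basis s t : (0 < size s)%N -> (0 < size t)%N ->
  phi (story_mul s t) = fglift (fun a => fglift (@ket_mul n a) (phiB t)) (phiB s).
Proof.
move=> s0 t0; rewrite /story_mul.
case: eqP => e.
  have [h1 h2 h3 h4] := fair_cat s0 t0 e.
  rewrite phiU /phiB h1 h2 h3 h4.
  case: (fair s); case: (fair t) => /=; rewrite ?fglift0 //.
    by rewrite fgliftZ fglift1 fgliftZ fglift1 /ket_mul /= e eqxx scalerA.
  by rewrite fgliftZ fglift1 fglift0 scaler0.
rewrite raddf0 /phiB; case: (fair s); case: (fair t) => /=; rewrite ?fglift0 //.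
  rewrite fgliftZ fglift1 fgliftZ fglift1 /ket_mul /=.
  by case: eqP => h; [case: e | rewrite !scaler0].
by rewrite fgliftZ fglift1 fglift0 scaler0.
Qed.

End Main.

Lemma freeg_decomp (T : choiceType) (D : {freeg T / CC}) :
  D = \sum_(z <- dom D) coeff z D *: << z >>.
Proof. by rewrite -{1}[D]freeg_sumE; apply: eq_bigr => z _; rewrite freegUZ. Qed.

Section Ideal.
Variables (n : nat) (K : {set simplex n}).
Local Notation ideal := (in_simplicial_ideal K).

Lemma ideal0 : ideal 0.
Proof. by exists [::]; split=> //; rewrite big_nil. Qed.

Lemma idealD x y : ideal x -> ideal y -> ideal (x + y).
Proof.
case=> [g1 [h1 ->]] [g2 [h2 ->]]; exists (g1 ++ g2); split; last by rewrite big_cat.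
by move=> cg; rewrite mem_cat => /orP[/h1|/h2].
Qed.

Lemma idealZ c x : ideal x -> ideal (c *: x).
Proof.
case=> [g [h ->]]; exists [seq (c * cg.1, cg.2) | cg <- g]; split.
  by move=> cg /mapP[cg' /h H ->].
rewrite big_map scaler_sumr; apply: eq_bigr => cg _; rewrite scalerA //.
Qed.

Lemma ideal_gen g : unfair_gen K g \/ fair_gen K g -> ideal g.
Proof.
move=> H; exists [:: (1, g)]; split; first by move=> cg; rewrite inE => /eqP->.
by rewrite big_seq1 scale1r.
Qed.

Lemma ideal_sum (I : eqType) (r : seq I) (F : I -> FS n) :
  (forall i, i \in r -> ideal (F i)) -> ideal (\sum_(i <- r) F i).
Proof.
elim: r => [|i r IH] H; first by rewrite big_nil; exact: ideal0.
rewrite big_cons; apply: idealD; first by apply: H; exact: mem_head.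
by apply: IH => j jr; apply: H; rewrite inE jr orbT.
Qed.

End Ideal.

Lemma fglift_eq (T : choiceType) (M : lmodType CC) (F G : T -> M) (D : {freeg T / CC}) :
  F =1 G -> fglift F D = fglift G D.
Proof. by move=> FG; rewrite !fgliftE; apply: eq_bigr => z _; rewrite FG. Qed.

Lemma phiE n (D : FS n) : phi n D = \sum_(s <- dom D) coeff s D *: phiB s.
Proof. exact: fgliftE. Qed.

Lemma psiE n (D : FI n) : psi n D = \sum_(s <- dom D) coeff s D *: psiB s.
Proof. exact: fgliftE. Qed.

Lemma ideal_story n (K : {set simplex n}) s : is_simplicial_complex K ->
  is_story K s -> in_simplicial_ideal K (<< s >> - psi n (phi n << s >>)).
Proof.
move=> HK hs; have [s0 fK lK] := story_ends hs.
rewrite phiU /phiB.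
case fs: (fair s); last first.
  rewrite raddf0 subr0; apply: ideal_gen; left; exists s; split => //.
    by apply: fair_size1; rewrite ?fs.
  by rewrite fs.
have [sub card] := fair_sub_card s0 fs.
rewrite linearZ_LR psiU /psiB /=.
have [s1|s1] := ltnP 1 (size s); last first.
  case: s s0 s1 hs fK lK fs sub card => [|a [|b s']] //= _ _ hs fK lK fs sub card.
  rewrite /first /final /= canon_refl /eps_story /= !scale1r subrr; exact: ideal0.
set c := canon (first s) (final s).
have -> : << s >> - eps_story s *: (eps_story c *: << c >>) =
    eps_story s *: (eps_story s *: << s >> - eps_story c *: << c >>).
  by rewrite scalerBr !scalerA eps_story_sq scale1r.
apply: idealZ; apply: ideal_gen; right; exists s, c.
have cs : is_story K c by exact: canon_story.
have cf : fair c by exact: canon_fair.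
have cfirst : first c = first s by exact: canon_head.
have cfinal : final c = final s by exact: canon_last.
have c0 : (0 < size c)%N by rewrite /c /canon build_size.
have [_ ccard] := fair_sub_card c0 cf.
rewrite cfirst cfinal card in ccard.
split=> //.
- by rewrite hs cs fs cf.
- split=> //; move/eqP: ccard; rewrite eqn_add2l => /eqP; lia.
Qed.

Unset Implicit Arguments.

Theorem mainTheorem3 (n : nat) (K : {set simplex n}) :
  (0 < n)%N -> is_simplicial_complex K ->
  exists phi : {linear FS n -> FI n},
    [/\ (forall x, in_stories_alg K x -> in_incidence_alg K (phi x)),
        (forall x y, in_stories_alg K x -> in_stories_alg K y ->
           phi (stories_mul x y) = incidence_mul (phi x) (phi y)),
        phi (stories_one K) = incidence_one K,
        (forall f, in_incidence_alg K f ->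
           exists x, in_stories_alg K x /\ phi x = f) &
        (forall x, in_stories_alg K x ->
           (phi x = 0 <-> in_simplicial_ideal K x))].
Proof.
move=> n0 HK; exists (phi n); split.
- move=> x hx PQ; rewrite phiE => /dom_sum_subset /flattenP [l /mapP [s]].
  rewrite mem_filter /= => sx -> /domZ_subset.
  have [s0 fK lK] := story_ends (hx s sx).
  rewrite /phiB; case fs: (fair s); last by rewrite dom0.
  move/domZ_subset; rewrite domU1 inE => /eqP -> /=.
  have [sub _] := fair_sub_card s0 fs.
  by rewrite fK lK sub.
- move=> x y hx hy.
  have -> : stories_mul x y = \sum_(s <- dom x) \sum_(t <- dom y)
      (coeff s x * coeff t y) *: story_mul s t.
    rewrite /stories_mul fgliftE; apply: eq_bigr => s _.
    rewrite fgliftE scaler_sumr; apply: eq_bigr => t _; by rewrite scalerA.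
  have -> : incidence_mul (phi n x) (phi n y) = \sum_(s <- dom x) \sum_(t <- dom y)
      (coeff s x * coeff t y) *: fglift (fun a => fglift (@ket_mul n a) (phiB t)) (phiB s).
    rewrite /incidence_mul (phiE y).
    rewrite (@fglift_eq _ _ _ (fun a => \sum_(t <- dom y) coeff t y *:
                fglift (@ket_mul n a) (phiB t))); last first.
      by move=> a; rewrite fglift_sum; apply: eq_bigr => t _; rewrite fgliftZ.
    rewrite fglift_linF phiE exchange_big /=; apply: eq_bigr => s _.
    rewrite fglift_sum scaler_sumr; apply: eq_bigr => t _.
    by rewrite fgliftZ scalerA mulrC.
  rewrite linear_sum; apply: eq_big_seq => s sx.
  rewrite linear_sum; apply: eq_big_seq => t ty.
  have [s0 _ _] := story_ends (hx s sx); have [t0 _ _] := story_ends (hy t ty).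
  by rewrite linearZ_LR phi_mul_basis.
- rewrite /stories_one linear_sum /incidence_one; apply: eq_bigr => P _.
  by rewrite phiU /phiB /fair /= /eps_story /= scale1r.
- move=> f hf; exists (psi n f); split.
    move=> s; rewrite psiE => /dom_sum_subset /flattenP [l /mapP [pq]].
    rewrite mem_filter /= => pqf -> /domZ_subset /domZ_subset.
    rewrite domU1 inE => /eqP ->.
    by case/and3P: (hf pq pqf) => h1 h2 h3; apply: canon_story.
  rewrite psiE linear_sum [in RHS](freeg_decomp f); apply: eq_big_seq => pq pqf.
  case/and3P: (hf pq pqf) => h1 h2 h3.
  rewrite linearZ_LR /psiB linearZ_LR phiU /phiB canon_fair (scalerA (eps_story _) (eps_story _)) eps_story_sq scale1r.
  by rewrite /first canon_head /final canon_last //; case: pq {pqf h1 h2 h3}.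
- move=> x hx; split.
    move=> h0.
    have E : x - psi n (phi n x) =
        \sum_(s <- dom x) coeff s x *: (<< s >> - psi n (phi n << s >>)).
      rewrite (eq_bigr _ (fun s _ => scalerBr _ _ _)) sumrB -freeg_decomp.
      congr (_ - _); rewrite [in LHS](freeg_decomp x) !linear_sum.
      by apply: eq_bigr => s _; rewrite !linearZ_LR.
    have : in_simplicial_ideal K (x - psi n (phi n x)).
      rewrite E; apply: ideal_sum => s sx; apply: idealZ.
      exact: ideal_story (hx s sx).
    by rewrite h0 raddf0 subr0.
  case=> gs [hg ->]; rewrite linear_sum big1_seq // => cg /andP[_ cgin].
  rewrite linearZ_LR; case: (hg cg cgin) => [[s [_ _ fs ->]] | [s [t [hst _ ef el ->]]]].
    by rewrite phiU /phiB (negbTE fs) scaler0.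
  case/and4P: hst => _ _ fs ft.
  rewrite (_ : phi n (eps_story s *: << s >> - eps_story t *: << t >>) =
     fglift (@phiB n) (eps_story s *: << s >> - eps_story t *: << t >>)) //.
  rewrite fgliftB !fgliftZ !fglift1 /phiB fs ft !scalerA !eps_story_sq !scale1r.
  by rewrite ef el subrr scaler0.
Qed.
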